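(* Under the standing setup, let $g,\tilde g,h,\tilde h$ satisfy $1\ge g\ge\tilde g\ge0$ and $1\ge h\ge\tilde h\ge0$. If $q(g,h)\ge0$ and $m(\tilde g,\tilde h)\ge0$, then $f(g,h)\ge f(\tilde g,\tilde h)$.
   Context: Standing setup. Fix $n\in\mathbb N$ and $W=[w_{ij}]\in\mathbb R^{n\times n}$ with $w_{ij}\ge0$, $w_{ii}=0$. Let $\|W\|_\infty=\max_i\sum_j|w_{ij}|$, $\|W\|_1=\max_j\sum_i|w_{ij}|$, let $\lambda$ be the spectral radius of $W$, and assume there is $c\in\mathbb R^n$ with all entries positive and $W^\top c=\lambda c$. Fix $\beta\ge\gamma\ge0$ with $1-\max\{\|W\|_\infty,\|W\|_1\}>\max\{2\beta,4\gamma\}$. Fix $s\in[0,1]^n$; set $\widehat c_i=c_i/\sum_jc_j$, $\widehat s=\sum_i\widehat c_is_i$, $\chi=\sum_i\widehat c_is_i\sum_jw_{ij}$. For $g,h\in[0,1]$ define $$f(g,h)=\frac{(1-2\beta+(h-g)\gamma)\widehat s-\chi+(h+g)\beta+(g^2-h^2)\gamma}{1-\lambda+(g-h)\gamma}\,c^\top\mathbf 1,$$ $$q(g,h)=(\beta+\gamma\widehat s-2\gamma h)(1-\lambda+\gamma g)+\gamma\big[(1-2\beta-g\gamma)\widehat s-\chi+g\beta+g^2\gamma\big]+\gamma^2h^2,$$ $$m(g,h)=(\beta-\gamma\widehat s+2\gamma g)(1-\lambda-h\gamma)+g^2\gamma^2-\gamma\big[(1-2\beta+h\gamma)\widehat s+h\beta-h^2\gamma-\chi\big].$$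 *)

(* Defs.v *)
From HB Require Import structures.
From mathcomp Require Import all_boot all_order all_algebra.
Set Implicit Arguments. Unset Strict Implicit. Unset Printing Implicit Defensive.
Import Order.TTheory GRing.Theory Num.Theory.
Local Open Scope ring_scope.

Section Defs.
Variables (R : realFieldType) (n : nat).

(* ||W||_oo = max_i sum_j |w_ij|  (max of nonnegative numbers; 0 if n = 0) *)
Definition norm_inf (W : 'M[R]_n) : R :=
  \big[Num.max/0]_(i < n) \sum_(j < n) `|W i j|.
Definition norm_one (W : 'M[R]_n) : R :=
  \big[Num.max/0]_(j < n) \sum_(i < n) `|W i j|.

(* a + i b is a (complex) eigenvalue of the real matrix W: there is a nonzero
   complex vector x + i y with W (x + i y) = (a + i b)(x + i y). *)
Definition complex_eigenvalue (W : 'M[R]_n) (a b : R) : Prop :=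
  exists x y : 'cV[R]_n, (x != 0 \/ y != 0) /\
    W *m x = a *: x - b *: y /\ W *m y = b *: x + a *: y.

(* lam is the spectral radius of W: the maximum modulus of the complex
   eigenvalues of W (moduli compared through their squares). *)
Definition spectral_radius (W : 'M[R]_n) (lam : R) : Prop :=
  0 <= lam /\
  (exists a b, complex_eigenvalue W a b /\ a ^+ 2 + b ^+ 2 = lam ^+ 2) /\
  (forall a b, complex_eigenvalue W a b -> a ^+ 2 + b ^+ 2 <= lam ^+ 2).

Definition chat (c : 'cV[R]_n) (i : 'I_n) : R := c i 0 / \sum_(j < n) c j 0.
Definition shat (c s : 'cV[R]_n) : R := \sum_(i < n) chat c i * s i 0.
Definition chi (W : 'M[R]_n) (c s : 'cV[R]_n) : R :=
  \sum_(i < n) chat c i * s i 0 * \sum_(j < n) W i j.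
Definition csum (c : 'cV[R]_n) : R := \sum_(i < n) c i 0.

Definition f_fun (W : 'M[R]_n) (c s : 'cV[R]_n) (lam beta gamma g h : R) : R :=
  ((1 - 2 * beta + (h - g) * gamma) * shat c s - chi W c s + (h + g) * beta
     + (g ^+ 2 - h ^+ 2) * gamma) / (1 - lam + (g - h) * gamma) * csum c.

Definition q_fun (W : 'M[R]_n) (c s : 'cV[R]_n) (lam beta gamma g h : R) : R :=
  (beta + gamma * shat c s - 2 * gamma * h) * (1 - lam + gamma * g)
  + gamma * ((1 - 2 * beta - g * gamma) * shat c s - chi W c s + g * beta
             + g ^+ 2 * gamma)
  + gamma ^+ 2 * h ^+ 2.

Definition m_fun (W : 'M[R]_n) (c s : 'cV[R]_n) (lam beta gamma g h : R) : R :=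
  (beta - gamma * shat c s + 2 * gamma * g) * (1 - lam - h * gamma)
  + g ^+ 2 * gamma ^+ 2
  - gamma * ((1 - 2 * beta + h * gamma) * shat c s + h * beta
             - h ^+ 2 * gamma - chi W c s).

End Defs.

(* Main.v *)
Require Import Defs.
From HB Require Import structures.
From mathcomp Require Import all_boot all_order all_algebra.
From mathcomp Require Import ring lra.
Import Order.TTheory GRing.Theory Num.Theory.
Local Open Scope ring_scope.

Lemma frac_le_aux (R : realFieldType) (N1 N2 D1 D2 : R) :
  0 < D1 -> 0 < D2 -> N2 * D1 <= N1 * D2 -> N2 / D2 <= N1 / D1.
Proof.
move=> p1 p2 H; rewrite ler_pdivrMr // mulrAC ler_pdivlMr //.
Qed.

Theorem lemma4 (R : realFieldType) (n : nat) (W : 'M[R]_n) (lam : R)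
    (c s : 'cV[R]_n) (beta gamma : R) (g gt h ht : R)
    (hW_nonneg : forall i j, 0 <= W i j)
    (hW_diag : forall i, W i i = 0)
    (hlam : spectral_radius W lam)
    (hc_pos : forall i, 0 < c i 0)
    (hc_eig : W^T *m c = lam *: c)
    (hbg : beta >= gamma) (hg0 : gamma >= 0)
    (hnorm : 1 - Num.max (norm_inf W) (norm_one W)
               > Num.max (2 * beta) (4 * gamma))
    (hs : forall i, 0 <= s i 0 <= 1)
    (hg : 1 >= g) (hggt : g >= gt) (hgt : gt >= 0)
    (hh : 1 >= h) (hhht : h >= ht) (hht : ht >= 0)
    (hq : q_fun W c s lam beta gamma g h >= 0)
    (hm : m_fun W c s lam beta gamma gt ht >= 0) :
  f_fun W c s lam beta gamma g h >= f_fun W c s lam beta gamma gt ht.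
Proof.
have cs0 : 0 <= csum c by rewrite /csum; apply: sumr_ge0 => i _; exact: ltW.
have [cs_eq0|cs_pos] := eqVneq (csum c) 0.
  by rewrite /f_fun cs_eq0 !mulr0.
have {}cs_pos : 0 < csum c by rewrite lt_def cs_pos.
have Lb : lam <= norm_inf W.
  have E : csum c * lam = \sum_(j < n) c j 0 * \sum_(i < n) W j i.
    rewrite mulrC /csum mulr_sumr.
    have -> : \sum_(i < n) lam * c i 0 = \sum_(i < n) (W^T *m c) i 0.
      by apply: eq_bigr => i _; rewrite hc_eig !mxE.
    under eq_bigr => i _ do rewrite mxE.
    rewrite exchange_big /=; apply: eq_bigr => j _.
    rewrite mulr_sumr; apply: eq_bigr => i _; by rewrite mxE mulrC.
  have : csum c * lam <= csum c * norm_inf W.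
    rewrite E /csum mulr_suml; apply: ler_sum => j _.
    apply: ler_wpM2l; first exact: ltW.
    have -> : \sum_(i < n) W j i = \sum_(i < n) `|W j i|.
      by apply: eq_bigr => i _; rewrite ger0_norm.
    exact: (le_bigmax _ (fun j => \sum_(i < n) `|W j i|)).
  by rewrite ler_pM2l.
have Hmx1 : norm_inf W <= Num.max (norm_inf W) (norm_one W) by rewrite le_max lexx.
have Hmx2 : 4 * gamma <= Num.max (2 * beta) (4 * gamma) by rewrite le_max lexx orbT.
have Dpos : forall a b, 0 <= a <= 1 -> 0 <= b <= 1 -> 0 < 1 - lam + (a - b) * gamma.
  move=> a b /andP[a0 a1] /andP[b0 b1]; nra.
set S := shat c s. set X := chi W c s.
rewrite /f_fun -/S -/X.
apply: (@le_trans _ _ (((1 - 2 * beta + (ht - g) * gamma) * S - X + (ht + g) * beta +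
     (g ^+ 2 - ht ^+ 2) * gamma) / (1 - lam + (g - ht) * gamma) * csum c)).
  apply: ler_wpM2r => //; apply: frac_le_aux; try apply: Dpos; try (apply/andP; split; lra).
  rewrite -subr_ge0.
  rewrite [X in 0 <= X](_ : _ = (g - gt) * (m_fun W c s lam beta gamma gt ht + gamma * (g - gt) * (1 - lam + (gt - ht) * gamma))); last first.
    rewrite /m_fun -/S -/X; ring.
  have D2p : 0 < 1 - lam + (gt - ht) * gamma by apply: Dpos; apply/andP; split; lra.
  apply: mulr_ge0; first lra.
  apply: addr_ge0 => //; apply: mulr_ge0; [apply: mulr_ge0; lra| exact: ltW].
apply: ler_wpM2r => //; apply: frac_le_aux; try apply: Dpos; try (apply/andP; split; lra).
rewrite -subr_ge0.
rewrite [X in 0 <= X](_ : _ = (h - ht) * (q_fun W c s lam beta gamma g h + gamma * (h - ht) * (1 - lam + (g - h) * gamma))); last first.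
  rewrite /q_fun -/S -/X; ring.
have D1p : 0 < 1 - lam + (g - h) * gamma by apply: Dpos; apply/andP; split; lra.
apply: mulr_ge0; first lra.
apply: addr_ge0 => //; apply: mulr_ge0; [apply: mulr_ge0; lra| exact: ltW].
Qed.
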